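(* Let $G$ be a finite nilpotent group whose order is divisible by at least two distinct primes. Then the cyclic graph $\Delta(G)$ is connected and $\mathrm{diam}(\Delta(G))\le 3$.
   Context: For a finite group $G$, the cyclic graph $\Delta(G)$ has vertex set $G^{\#}=G\setminus\{1\}$, and distinct vertices $x,y$ are adjacent if and only if the subgroup $\langle x,y\rangle$ is cyclic. The diameter is the maximum graph distance between two vertices. *)

(* Defs.v *)
From mathcomp Require Import all_boot all_fingroup all_solvable.
Set Implicit Arguments. Unset Strict Implicit. Unset Printing Implicit Defensive.
Local Open Scope group_scope.

Definition cyc_adj (gT : finGroupType) (G : {set gT}) : rel gT :=
  fun x y => [&& x \in G^#, y \in G^#, x != y & cyclic <<[set x; y]>>].

Definition cyc_walk_le (gT : finGroupType) (G : {set gT}) (x y : gT) (n : nat) :=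
  exists p : seq gT, [/\ path (cyc_adj G) x p, last x p = y & size p <= n].

Definition cyc_graph_connected (gT : finGroupType) (G : {set gT}) :=
  forall x y, x \in G^# -> y \in G^# ->
    exists p : seq gT, path (cyc_adj G) x p /\ last x p = y.

Definition cyc_graph_diam_le (gT : finGroupType) (G : {set gT}) (n : nat) :=
  forall x y, x \in G^# -> y \in G^# -> cyc_walk_le G x y n.

(* Main.v *)
Require Import Defs.
From mathcomp Require Import all_boot all_fingroup all_solvable.

Set Implicit Arguments. Unset Strict Implicit. Unset Printing Implicit Defensive.

Section Aux.
Variable gT : finGroupType.
Local Open Scope group_scope.

Lemma cyc2_coprime (G : {group gT}) (a b : gT) : nilpotent G -> a \in G -> b \in G ->
  coprime #[a] #[b] -> cyclic <<[set a; b]>>.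
Proof.
move=> nilG aG bG co.
have cab: commute a b.
  have sa : <[a]> \subset G by rewrite cycle_subG.
  have sb : <[b]> \subset G by rewrite cycle_subG.
  have := @sub_nilpotent_cent2 gT <[b]>%G <[a]>%G G nilG sa sb co.
  move=> H; have : <[b]> \subset 'C(<[a]>) := H.
  rewrite cycle_subG => /centP/(_ a (cycle_id a)) cba; exact: esym cba.
apply: (cyclicS _ (cycle_cyclic (a * b))).
rewrite gen_subG subUset !sub1set -!cycle_subG cycleMsub //.
by rewrite cab cycleMsub // coprime_sym.
Qed.

Lemma cyc2_pow (x a : gT) : a \in <[x]> -> cyclic <<[set x; a]>>.
Proof.
move=> ax; apply: (cyclicS _ (cycle_cyclic x)).
by rewrite gen_subG subUset !sub1set cycle_id ax.
Qed.

Lemma cyc2_sym (x y : gT) : cyclic <<[set x; y]>> -> cyclic <<[set y; x]>>.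
Proof. by rewrite setUC. Qed.

Lemma walk_step (G : {set gT}) u v : u \in G^# -> v \in G^# ->
  cyclic <<[set u; v]>> -> cyc_walk_le G u v 1.
Proof.
move=> uG vG cyc; case: (eqVneq u v) => [->|ne].
  by exists [::].
by exists [:: v]; rewrite /= /cyc_adj uG vG ne cyc.
Qed.

Lemma walk_cat (G : {set gT}) u v w m n :
  cyc_walk_le G u v m -> cyc_walk_le G v w n -> cyc_walk_le G u w (m + n).
Proof.
case=> p [P1 L1 S1] [q [P2 L2 S2]]; exists (p ++ q).
by rewrite cat_path last_cat P1 L1 P2 L2 size_cat leq_add.
Qed.

Lemma chain3 (G : {set gT}) x a b y : x \in G^# -> a \in G^# -> b \in G^# -> y \in G^# ->
  cyclic <<[set x; a]>> -> cyclic <<[set a; b]>> -> cyclic <<[set b; y]>> ->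
  cyc_walk_le G x y 3.
Proof.
move=> xG aG bG yG c1 c2 c3.
exact: (walk_cat (walk_cat (walk_step xG aG c1) (walk_step aG bG c2)) (walk_step bG yG c3)).
Qed.

Lemma prime_elt (G : {group gT}) a p : a \in G -> prime p -> #[a] = p -> a \in G^#.
Proof.
move=> aG pp oa; rewrite !inE aG andbT; apply/eqP=> a1.
by move: pp; rewrite -oa a1 order1.
Qed.

Lemma sub_elt (G : {group gT}) x p : x \in G -> prime p -> p %| #[x] ->
  exists2 a, a \in <[x]> & #[a] = p.
Proof.
by move=> xG pp pd; have [a ax oa] := Cauchy pp pd; exists a.
Qed.

End Aux.

Theorem lemma2p4 (gT : finGroupType) (G : {group gT}) :
  nilpotent G -> 2 <= size (primes #|G|) ->
  cyc_graph_connected G /\ cyc_graph_diam_le G 3.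
Proof.
Local Open Scope group_scope.
move=> nilG hpr.
suff D: cyc_graph_diam_le G 3.
  split=> //; move=> x y hx hy; case: (D x y hx hy) => s [P L _]; by exists s.
move=> x y hx hy.
have xG : x \in G by move: hx; rewrite !inE => /andP[].
have yG : y \in G by move: hy; rewrite !inE => /andP[].
have ox : 1 < #[x].
  move: hx; rewrite !inE => /andP[x1 _].
  by rewrite ltn_neqAle eq_sym order_eq1 x1 order_gt0.
have oy : 1 < #[y].
  move: hy; rewrite !inE => /andP[y1 _].
  by rewrite ltn_neqAle eq_sym order_eq1 y1 order_gt0.
set p := pdiv #[x]; set r := pdiv #[y].
have pp : prime p by apply: pdiv_prime.
have pr : prime r by apply: pdiv_prime.
have [q qpr qp] : exists2 q, q \in primes #|G| & q != p.
  move: hpr (primes_uniq #|G|); case: (primes #|G|) => [|q1 [|q2 s]] //= _.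
  rewrite inE negb_or => /andP[/andP[n12 _] _].
  have h1 : q1 \in [:: q1, q2 & s] := mem_head _ _.
  have h2 : q2 \in [:: q1, q2 & s] by rewrite !inE eqxx !orbT.
  case: (eqVneq q1 p) => [e|ne]; last by exists q1.
  by exists q2 => //; rewrite -e eq_sym.
move: qpr; rewrite mem_primes => /and3P[pq _ qG].
have [z zG oz] := Cauchy pq qG.
have zG' := prime_elt zG pq oz.
have [xp xpx oxp] := sub_elt xG pp (pdiv_dvd _).
have xpG : xp \in G by apply: (subsetP _ _ xpx); rewrite cycle_subG.
have xpG' := prime_elt xpG pp oxp.
have [yr yry oyr] := sub_elt yG pr (pdiv_dvd _).
have yrG : yr \in G by apply: (subsetP _ _ yry); rewrite cycle_subG.
have yrG' := prime_elt yrG pr oyr.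
have copq : forall a b, prime a -> prime b -> a != b -> coprime a b.
  by move=> a b pa pb ne; rewrite prime_coprime // dvdn_prime2 // ne.
case: (eqVneq r p) => [erp|nrp]; last first.
  apply: (chain3 hx xpG' yrG' hy); first exact: cyc2_pow.
    by apply: (cyc2_coprime nilG) => //; rewrite oxp oyr copq // eq_sym.
  exact/cyc2_sym/cyc2_pow.
have [qy|nqy] := boolP (q %| #[y]); last first.
  apply: (chain3 hx xpG' zG' hy); first exact: cyc2_pow.
    by apply: (cyc2_coprime nilG) => //; rewrite oxp oz copq // eq_sym.
  by apply: (cyc2_coprime nilG) => //; rewrite oz prime_coprime.
have [qx|nqx] := boolP (q %| #[x]); last first.
  apply: (chain3 hx zG' yrG' hy).
      by apply: (cyc2_coprime nilG) => //; rewrite oz coprime_sym prime_coprime.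
    by apply: (cyc2_coprime nilG) => //; rewrite oz oyr erp copq.
  exact/cyc2_sym/cyc2_pow.
have [xq xqx oxq] := sub_elt xG pq qx.
have xqG : xq \in G by apply: (subsetP _ _ xqx); rewrite cycle_subG.
have xqG' := prime_elt xqG pq oxq.
apply: (chain3 hx xqG' yrG' hy); first exact: cyc2_pow.
  by apply: (cyc2_coprime nilG) => //; rewrite oxq oyr erp copq.
exact/cyc2_sym/cyc2_pow.
Qed.
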